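(* Assume the setting of the context. Let $k\ge0$, $\bar w^k=(\bar x^k,\bar y^k)\in\mathcal{X}\times\mathbb{R}^m$, $\gamma_k,\beta_k>0$, $\tau_k\in(0,1)$, $c_k\in(-1,1]$, and set $\beta_{k+1}:=(1-\tau_k)\beta_k$, $\gamma_{k+1}:=(1-c_k\tau_k)\gamma_k$. Define $$\hat y^k:=(1-\tau_k)\bar y^k+\tau_k\beta_k^{-1}(A\bar x^k-b),\quad \bar x^{k+1}:=(1-\tau_k)\bar x^k+\tau_kx^\star_{\gamma_{k+1}}(\hat y^k),\quad \bar y^{k+1}:=\hat y^k+\frac{\gamma_{k+1}}{\bar L^g}\big(Ax^\star_{\gamma_{k+1}}(\hat y^k)-b\big).$$ If $\tau_k$ is chosen such that $\beta_{k+1}\gamma_{k+1}\ge\bar L^g\tau_k^2$, then $(\bar x^{k+1},\bar y^{k+1})\in\mathcal{X}\times\mathbb{R}^m$ and $$G_{\gamma_{k+1}\beta_{k+1}}(\bar x^{k+1},\bar y^{k+1})\le(1-\tau_k)G_{\gamma_k\beta_k}(\bar x^k,\bar y^k)-\psi_k,$$ where $\psi_k:=\tau_k(1-\tau_k)\gamma_k\big[d_b(Sx^\star_{\gamma_{k+1}}(\hat y^k),Sx_c)-c_k\,d_b(Sx^\star_{\gamma_{k+1}}(\bar y^k),Sx_c)\big]\ge0$.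
   Context: Problem: $f:\mathbb{R}^n\to\mathbb{R}\cup\{+\infty\}$ proper, closed, convex; $\mathcal{X}\subseteq\mathbb{R}^n$ nonempty, closed, convex; $A\in\mathbb{R}^{m\times n}$, $b\in\mathbb{R}^m$; $f^\star:=\min\{f(x):Ax=b,\ x\in\mathcal{X}\}$. Standing assumption: the solution set is nonempty and either $\mathcal{X}$ is a polytope or $\{x:Ax=b\}\cap\mathrm{relint}(\mathcal{X})\ne\emptyset$. Euclidean norms. Smoothing: $d_b(u,v):=p(u)-p(v)-\nabla p(v)^T(u-v)$ is the Bregman distance of a smooth strongly convex function $p$ (parameter $\sigma_d>0$); $S$ is a matrix with $n$ columns; $x_c\in\mathcal{X}$. For $\gamma>0$, $g_\gamma(y):=\min_{x\in\mathcal{X}}\{f(x)+y^T(Ax-b)+\gamma d_b(Sx,Sx_c)\}$ with minimizer $x^\star_\gamma(y)$. Standing smoothability assumption: there is a constant $\bar L^g>0$ such that for every $\gamma>0$, $g_\gamma$ is concave and differentiable with $\nabla g_\gamma(y)=Ax^\star_\gamma(y)-b$ Lipschitz continuous with constant $\bar L^g/\gamma$. Smoothed gap function: with $F(w):=(A^Ty,\ b-Ax)$ for $w=(x,y)$, $$G_{\gamma\beta}(\bar w):=\max_{w=(x,y)\in\mathcal{X}\times\mathbb{R}^m}\Big\{f(\bar x)-f(x)+F(\bar w)^T(\bar w-w)-\gamma d_b(Sx,Sx_c)-\tfrac{\beta}{2}\|y\|_2^2\Big\}.$$ *)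

(* Defs.v *)
From HB Require Import structures.
From mathcomp Require Import all_boot all_order all_algebra.
From mathcomp Require Import all_classical all_reals ereal.
Set Implicit Arguments. Unset Strict Implicit. Unset Printing Implicit Defensive.
Import Order.TTheory GRing.Theory Num.Theory.
Local Open Scope ring_scope.

Definition dotv {R : realType} {k : nat} (u v : 'cV[R]_k) : R :=
  \sum_(i < k) u i ord0 * v i ord0.
Definition norm2 {R : realType} {k : nat} (u : 'cV[R]_k) : R :=
  Num.sqrt (dotv u u).

Definition has_grad {R : realType} {k : nat} (h : 'cV[R]_k -> R)
  (v gv : 'cV[R]_k) : Prop :=
  forall eps : R, 0 < eps -> exists delta : R, 0 < delta /\
    forall u, norm2 (u - v) < delta ->
      `|h u - h v - dotv gv (u - v)| <= eps * norm2 (u - v).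

Definition closed_set {R : realType} {k : nat} (X : 'cV[R]_k -> Prop) : Prop :=
  forall x, (forall eps : R, 0 < eps -> exists y, X y /\ norm2 (y - x) < eps) -> X x.

Definition convex_set {R : realType} {k : nat} (X : 'cV[R]_k -> Prop) : Prop :=
  forall (x y : 'cV[R]_k) (t : R), X x -> X y -> 0 <= t <= 1 -> X (t *: x + (1 - t) *: y).

Definition proper_fun {R : realType} {k : nat} (f : 'cV[R]_k -> \bar R) : Prop :=
  (exists x, (f x < +oo)%E) /\ (forall x, (-oo < f x)%E).

Definition convex_fun {R : realType} {k : nat} (f : 'cV[R]_k -> \bar R) : Prop :=
  forall (x y : 'cV[R]_k) (t : R), 0 <= t <= 1 ->
    (f (t *: x + (1 - t) *: y)%R <= t%:E * f x + (1 - t)%:E * f y)%E.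

(* closed function: its epigraph {(x,t) | f x <= t} is closed in R^k x R *)
Definition closed_fun {R : realType} {k : nat} (f : 'cV[R]_k -> \bar R) : Prop :=
  forall x (t : R),
    (forall eps : R, 0 < eps -> exists y (s : R),
        (f y <= s%:E)%E /\ norm2 (y - x) < eps /\ `|s - t| < eps) ->
    (f x <= t%:E)%E.

Definition concave_fun {R : realType} {k : nat} (h : 'cV[R]_k -> R) : Prop :=
  forall (x y : 'cV[R]_k) (t : R), 0 <= t <= 1 ->
    t * h x + (1 - t) * h y <= h (t *: x + (1 - t) *: y).

Definition strongly_convex {R : realType} {k : nat} (p : 'cV[R]_k -> R) (sigma : R) : Prop :=
  forall (u v : 'cV[R]_k) (t : R), 0 <= t <= 1 ->
    p (t *: u + (1 - t) *: v) <=
      t * p u + (1 - t) * p v - sigma / 2 * t * (1 - t) * (norm2 (u - v)) ^+ 2.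

Definition bregman {R : realType} {k : nat} (p : 'cV[R]_k -> R) (gp : 'cV[R]_k -> 'cV[R]_k)
  (u v : 'cV[R]_k) : R :=
  p u - p v - dotv (gp v) (u - v).

Definition aff_hull {R : realType} {k : nat} (X : 'cV[R]_k -> Prop) (y : 'cV[R]_k) : Prop :=
  exists (N : nat) (pts : 'I_N -> 'cV[R]_k) (w : 'I_N -> R),
    (forall i, X (pts i)) /\ \sum_(i < N) w i = 1 /\ y = \sum_(i < N) w i *: pts i.

Definition relint {R : realType} {k : nat} (X : 'cV[R]_k -> Prop) (x : 'cV[R]_k) : Prop :=
  X x /\ exists eps : R, 0 < eps /\
    forall y, aff_hull X y -> norm2 (y - x) < eps -> X y.

Definition polytope {R : realType} {k : nat} (X : 'cV[R]_k -> Prop) : Prop :=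
  exists (N : nat) (pts : 'I_N -> 'cV[R]_k), forall x,
    X x <-> exists w : 'I_N -> R, (forall i, 0 <= w i) /\ \sum_(i < N) w i = 1 /\
                                  x = \sum_(i < N) w i *: pts i.

Definition primal_solution {R : realType} {n m : nat} (f : 'cV[R]_n -> \bar R)
  (X : 'cV[R]_n -> Prop) (A : 'M[R]_(m, n)) (b : 'cV[R]_m) (x : 'cV[R]_n) : Prop :=
  X x /\ A *m x = b /\ forall z, X z -> A *m z = b -> (f x <= f z)%E.

(* objective of the smoothed dual function g_gamma(y) at x *)
Definition smobj {R : realType} {n m q : nat} (f : 'cV[R]_n -> \bar R)
  (A : 'M[R]_(m, n)) (b : 'cV[R]_m) (p : 'cV[R]_q -> R) (gp : 'cV[R]_q -> 'cV[R]_q)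
  (S : 'M[R]_(q, n)) (xc : 'cV[R]_n) (gam : R) (y : 'cV[R]_m) (x : 'cV[R]_n) : \bar R :=
  (f x + (dotv y (A *m x - b) + gam * bregman p gp (S *m x) (S *m xc))%R%:E)%E.

Definition gsmooth {R : realType} {n m q : nat} (f : 'cV[R]_n -> \bar R)
  (X : 'cV[R]_n -> Prop) (A : 'M[R]_(m, n)) (b : 'cV[R]_m) (p : 'cV[R]_q -> R)
  (gp : 'cV[R]_q -> 'cV[R]_q) (S : 'M[R]_(q, n)) (xc : 'cV[R]_n) (gam : R)
  (y : 'cV[R]_m) : \bar R :=
  ereal_inf [set e | exists x, X x /\ e = smobj f A b p gp S xc gam y x].

Definition is_smoothed_minimizer {R : realType} {n m q : nat} (f : 'cV[R]_n -> \bar R)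
  (X : 'cV[R]_n -> Prop) (A : 'M[R]_(m, n)) (b : 'cV[R]_m) (p : 'cV[R]_q -> R)
  (gp : 'cV[R]_q -> 'cV[R]_q) (S : 'M[R]_(q, n)) (xc : 'cV[R]_n) (gam : R)
  (y : 'cV[R]_m) (xs : 'cV[R]_n) : Prop :=
  X xs /\ forall x, X x -> (smobj f A b p gp S xc gam y xs <= smobj f A b p gp S xc gam y x)%E.

Definition smoothable {R : realType} {n m q : nat} (f : 'cV[R]_n -> \bar R)
  (X : 'cV[R]_n -> Prop) (A : 'M[R]_(m, n)) (b : 'cV[R]_m) (p : 'cV[R]_q -> R)
  (gp : 'cV[R]_q -> 'cV[R]_q) (S : 'M[R]_(q, n)) (xc : 'cV[R]_n)
  (xstar : R -> 'cV[R]_m -> 'cV[R]_n) (Lg : R) : Prop :=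
  forall gam : R, 0 < gam ->
    let g := fun y => fine (gsmooth f X A b p gp S xc gam y) in
    (forall y, gsmooth f X A b p gp S xc gam y \is a fin_num) /\
    concave_fun g /\
    (forall y, has_grad g y (A *m xstar gam y - b)) /\
    (forall y1 y2, norm2 ((A *m xstar gam y1 - b) - (A *m xstar gam y2 - b))
                   <= Lg / gam * norm2 (y1 - y2)).

Definition gap {R : realType} {n m q : nat} (f : 'cV[R]_n -> \bar R)
  (X : 'cV[R]_n -> Prop) (A : 'M[R]_(m, n)) (b : 'cV[R]_m) (p : 'cV[R]_q -> R)
  (gp : 'cV[R]_q -> 'cV[R]_q) (S : 'M[R]_(q, n)) (xc : 'cV[R]_n) (gam bet : R)
  (xb : 'cV[R]_n) (yb : 'cV[R]_m) : \bar R :=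
  ereal_sup [set e | exists (x : 'cV[R]_n) (y : 'cV[R]_m), X x /\
     e = (f xb - f x
          + (dotv (A^T *m yb) (xb - x) + dotv (b - A *m xb) (yb - y)
             - gam * bregman p gp (S *m x) (S *m xc)
             - bet / 2 * (norm2 y) ^+ 2)%R%:E)%E].

(* Main.v *)
Require Import Defs.
From HB Require Import structures.
From mathcomp Require Import all_boot all_order all_algebra.
From mathcomp Require Import all_classical all_reals ereal.
From mathcomp Require Import ring lra.
Set Implicit Arguments. Unset Strict Implicit. Unset Printing Implicit Defensive.
Import Order.TTheory GRing.Theory Num.Theory.
Local Open Scope ring_scope.
Section V.
Variables (R : realType) (k : nat).
Implicit Types (u v w : 'cV[R]_k) (a : R).

Lemma dotvE u v : dotv u v = (u^T *m v) ord0 ord0.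
Proof. by rewrite /dotv !mxE; apply: eq_bigr => i _; rewrite !mxE. Qed.

Lemma dotvC u v : dotv u v = dotv v u.
Proof. by rewrite /dotv; apply: eq_bigr => i _; rewrite mulrC. Qed.

Lemma dotvDl u v w : dotv (u + v) w = dotv u w + dotv v w.
Proof. by rewrite /dotv -big_split; apply: eq_bigr => i _; rewrite mxE mulrDl. Qed.

Lemma dotvZl a u w : dotv (a *: u) w = a * dotv u w.
Proof. by rewrite /dotv mulr_sumr; apply: eq_bigr => i _; rewrite mxE mulrA. Qed.

Lemma dotvNl u w : dotv (- u) w = - dotv u w.
Proof. by rewrite -scaleN1r dotvZl mulN1r. Qed.

Lemma dotvBl u v w : dotv (u - v) w = dotv u w - dotv v w.
Proof. by rewrite dotvDl dotvNl. Qed.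

Lemma dotvDr u v w : dotv w (u + v) = dotv w u + dotv w v.
Proof. by rewrite dotvC dotvDl !(dotvC w). Qed.
Lemma dotvZr a u w : dotv w (a *: u) = a * dotv w u.
Proof. by rewrite dotvC dotvZl dotvC. Qed.
Lemma dotvNr u w : dotv w (- u) = - dotv w u.
Proof. by rewrite dotvC dotvNl dotvC. Qed.
Lemma dotvBr u v w : dotv w (u - v) = dotv w u - dotv w v.
Proof. by rewrite dotvDr dotvNr. Qed.

Lemma dotv_ge0 u : 0 <= dotv u u.
Proof. by rewrite /dotv; apply: sumr_ge0 => i _; rewrite -expr2 sqr_ge0. Qed.

Lemma norm2_sqr u : norm2 u ^+ 2 = dotv u u.
Proof. by rewrite /norm2 sqr_sqrtr // dotv_ge0. Qed.

Lemma norm2_ge0 u : 0 <= norm2 u.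
Proof. exact: sqrtr_ge0. Qed.

Lemma norm2Z a u : norm2 (a *: u) = `|a| * norm2 u.
Proof.
rewrite /norm2 dotvZl dotvZr mulrA -expr2 sqrtrM ?sqr_ge0 //.
by rewrite sqrtr_sqr.
Qed.

Lemma dotv0 u : dotv u u = 0 -> forall w, dotv u w = 0.
Proof.
move=> h w; rewrite /dotv in h *.
have h2 := (psumr_eq0P (P := predT) (F := fun i => u i ord0 * u i ord0)).
have hp : forall i, predT i -> 0 <= u i ord0 * u i ord0 by move=> i _; rewrite -expr2 sqr_ge0.
have: forall i, u i ord0 = 0.
  move=> i; have /eqP := h2 hp h i isT.
  by rewrite mulf_eq0 orbb => /eqP.
by move=> hu; apply: big1 => i _; rewrite hu mul0r.
Qed.

Lemma CS u v : dotv u v <= norm2 u * norm2 v.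
Proof.
set c := dotv u v.
have quad : forall t, 0 <= dotv u u - 2 * t * c + t ^+ 2 * dotv v v.
  move=> t; have := dotv_ge0 (u - t *: v).
  rewrite !dotvBl !dotvBr !dotvZl !dotvZr (dotvC v u) -/c.
  by congr (0 <= _); ring.
have quad2 : forall t, 0 <= dotv v v - 2 * t * c + t ^+ 2 * dotv u u.
  move=> t; have := dotv_ge0 (v - t *: u).
  rewrite !dotvBl !dotvBr !dotvZl !dotvZr (dotvC v u) -/c.
  by congr (0 <= _); ring.
have c2 : c ^+ 2 <= dotv u u * dotv v v.
  have [hv|hv] := ltrP 0 (dotv v v).
    have := quad (c / dotv v v).
    have hv0 : dotv v v != 0 by rewrite gt_eqF.
    move=> h.
    have : 0 <= dotv v v * (dotv u u - 2 * (c / dotv v v) * c + (c / dotv v v) ^+ 2 * dotv v v).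
      by rewrite mulr_ge0 // ltW.
    have -> : dotv v v * (dotv u u - 2 * (c / dotv v v) * c + (c / dotv v v) ^+ 2 * dotv v v)
       = dotv u u * dotv v v - c ^+ 2 by field.
    by rewrite subr_ge0.
  have hv0 : dotv v v = 0 by apply/eqP; rewrite eq_le hv dotv_ge0.
  have : c = 0 by rewrite /c dotvC; apply: dotv0.
  by move=> ->; rewrite hv0 mulr0 expr0n.
have na := norm2_ge0 u; have nb := norm2_ge0 v.
rewrite -!norm2_sqr -exprMn in c2.
have hP : 0 <= norm2 u * norm2 v by rewrite mulr_ge0.
move: c2 hP; set P := norm2 u * norm2 v => c2 hP.
have [//|hlt] := lerP c P.
have : P ^+ 2 < c ^+ 2 by nra.
by rewrite ltNge c2.
Qed.

End V.
Section G.
Variables (R : realType) (k : nat).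
Implicit Types (u v w : 'cV[R]_k) (a : R).

Lemma grad_ineq (h : 'cV[R]_k -> R) v gv u :
  has_grad h v gv ->
  (forall t, 0 < t < 1 -> h (v + t *: (u - v)) <= t * h u + (1 - t) * h v) ->
  h v + dotv gv (u - v) <= h u.
Proof.
move=> hg hc; set w := u - v; set nw := norm2 w.
have nw0 : 0 <= nw := norm2_ge0 w.
have key : forall e, 0 < e -> dotv gv w - e * nw <= h u - h v.
  move=> e e0; have [d [d0 hd]] := hg e e0.
  set t := d / (d + nw + 1).
  have den0 : 0 < d + nw + 1 by lra.
  have t0 : 0 < t by rewrite divr_gt0.
  have t1 : t < 1 by rewrite ltr_pdivrMr // mul1r; lra.
  have tw : t * nw < d.
    rewrite /t mulrAC ltr_pdivrMr //; nra.
  have := hd (v + t *: w); rewrite addrC addKr norm2Z gtr0_norm // => /(_ tw).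
  rewrite ler_norml => /andP [h1 _].
  have h2 : h (v + t *: w) <= t * h u + (1 - t) * h v by apply: hc; rewrite t0 t1.
  rewrite dotvZr in h1.
  have : t * (dotv gv w - e * nw) <= t * (h u - h v) by rewrite -/nw in h1; lra.
  by rewrite ler_pM2l.
rewrite -lerBrDl; apply/ler_addgt0Pr => e e0.
have := key (e / (nw + 1)) (divr_gt0 e0 (ltr_pwDr ltr01 nw0)).
have : e / (nw + 1) * nw <= e.
  rewrite mulrAC ler_pdivrMr; last by lra.
  nra.
lra.
Qed.

Lemma has_gradN (g : 'cV[R]_k -> R) v gv :
  has_grad g v gv -> has_grad (fun x => - g x) v (- gv).
Proof.
move=> hg e e0; have [d [d0 hd]] := hg e e0; exists d; split => // u hu.
have := hd u hu; rewrite dotvNl.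
have -> : - g u - - g v - - dotv gv (u - v) = - (g u - g v - dotv gv (u - v)) by ring.
by rewrite normrN.
Qed.

End G.
Section D.
Variables (R : realType) (k : nat).
Implicit Types (u v w y d : 'cV[R]_k) (a : R).

Lemma vec_comb (z w : 'cV[R]_k) t : z + t *: (w - z) = t *: w + (1 - t) *: z.
Proof. by apply/matrixP => i j; rewrite !mxE; ring. Qed.

Lemma vec2 a (v w z : 'cV[R]_k) : (1 - a) *: v + a *: w - z = (1 - a) *: (v - z) + a *: (w - z).
Proof. by apply/matrixP => i j; rewrite !mxE; ring. Qed.

Lemma dotv_comb a t (v w : 'cV[R]_k) : dotv (a *: v + t *: w) (a *: v + t *: w)
  = a ^+ 2 * dotv v v + 2 * t * a * dotv v w + t ^+ 2 * dotv w w.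
Proof. rewrite !dotvDl !dotvDr !dotvZl !dotvZr (dotvC w v); ring. Qed.

Lemma dotv_comb1 a t (v w z : 'cV[R]_k) : dotv (a *: v + t *: w) z
  = a * dotv v z + t * dotv w z.
Proof. by rewrite !dotvDl !dotvZl. Qed.

Lemma CSl u v : - (norm2 u * norm2 v) <= dotv u v.
Proof.
have := CS (- u) v; rewrite dotvNl -scaleN1r norm2Z normrN normr1 mul1r.
lra.
Qed.

Lemma concave_grad (g : 'cV[R]_k -> R) (G : 'cV[R]_k -> 'cV[R]_k) :
  concave_fun g -> (forall y, has_grad g y (G y)) ->
  forall z w, g w <= g z + dotv (G z) (w - z).
Proof.
move=> hc hg z w.
have := grad_ineq (u := w) (has_gradN (hg z)).
rewrite dotvNl.
have : forall t, 0 < t < 1 -> - g (z + t *: (w - z)) <= t * - g w + (1 - t) * - g z.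
  move=> t /andP [t0 t1]; rewrite vec_comb.
  have := hc w z t; rewrite (ltW t0) (ltW t1) => /(_ isT); lra.
move=> h /(_ h); lra.
Qed.

Lemma descent (g : 'cV[R]_k -> R) (G : 'cV[R]_k -> 'cV[R]_k) L :
  0 <= L -> concave_fun g -> (forall y, has_grad g y (G y)) ->
  (forall y1 y2, norm2 (G y1 - G y2) <= L * norm2 (y1 - y2)) ->
  forall y d, g y + dotv (G y) d - L / 2 * dotv d d <= g (y + d).
Proof.
move=> L0 hc hg hL y d.
have cg := concave_grad hc hg.
set GD := dotv (G y) d; set D := dotv d d.
have D0 : 0 <= D := dotv_ge0 d.
have nd2 : norm2 d * norm2 d = D by rewrite -expr2 norm2_sqr.
have nd0 := norm2_ge0 d.
have main : forall N : nat, (0 < N)%N ->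
    g y + GD - L / 2 * D - L * D / (2 * N%:R) <= g (y + d).
  move=> N N0; set s := N%:R^-1 : R.
  have s0 : 0 < s by rewrite invr_gt0 ltr0n.
  have P : forall j : nat, j%:R * s * GD - L * s ^+ 2 * (j%:R * (j%:R + 1) / 2) * D
             <= g (y + (j%:R * s) *: d) - g y.
    elim=> [|j IH].
      by rewrite mul0r scale0r addr0 !mul0r subrr mulr0 mul0r subr0 lexx.
    set a := j%:R * s in IH *.
    have a' : j.+1%:R * s = a + s by rewrite -natr1 mulrDl mul1r.
    have a0 : 0 <= a by rewrite mulr_ge0 // ltW.
    have step : g (y + (a + s) *: d) - g (y + a *: d) >= s * GD - L * s * (a + s) * D.
      have h1 := cg (y + (a + s) *: d) (y + a *: d).
      have e1 : y + a *: d - (y + (a + s) *: d) = (- s) *: d.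
        by apply/matrixP => i jj; rewrite !mxE; ring.
      rewrite e1 dotvZr in h1.
      have h2 : dotv (G (y + (a + s) *: d)) d >= GD - L * (a + s) * D.
        have -> : dotv (G (y + (a + s) *: d)) d = GD + dotv (G (y + (a + s) *: d) - G y) d.
          by rewrite dotvBl /GD; ring.
        have h3 := CSl (G (y + (a + s) *: d) - G y) d.
        have h4 := hL (y + (a + s) *: d) y.
        have e2 : y + (a + s) *: d - y = (a + s) *: d by rewrite addrC addKr.
        move: h4; rewrite e2 norm2Z ger0_norm; last by lra.
        move=> h4.
        have : norm2 (G (y + (a + s) *: d) - G y) * norm2 d <= L * ((a + s) * norm2 d) * norm2 d.
          by apply: ler_wpM2r.
        rewrite -!mulrA nd2 => h5; rewrite mulrA; lra.
      nra.
    rewrite a' -natr1.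
    move: IH step; rewrite /a => IH step.
    lra.
  have := P N; rewrite /s mulfV ?pnatr_eq0 -?lt0n // scale1r.
  have -> : L * N%:R^-1 ^+ 2 * (N%:R * (N%:R + 1) / 2) * D = L / 2 * D + L * D / (2 * N%:R).
    by field; rewrite pnatr_eq0 -lt0n.
  rewrite mul1r; lra.
apply/ler_addgt0Pr => e e0.
set N := (Num.bound (L * D / (2 * e))).+1.
have two0 : (0:R) < 2 by lra.
have hN := archi_boundP (x := L * D / (2 * e)) (divr_ge0 (mulr_ge0 L0 D0) (ltW (mulr_gt0 two0 e0))).
have N0 : (0 < N)%N by [].
have := main N N0.
have : L * D / (2 * N%:R) <= e.
  have Npos : 0 < N%:R :> R by rewrite ltr0n.
  rewrite ler_pdivrMr; last by rewrite mulr_gt0.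
  have : L * D / (2 * e) < N%:R.
    by apply: (lt_le_trans hN); rewrite ler_nat.
  rewrite ltr_pdivrMr; last by rewrite mulr_gt0.
  nra.
lra.
Qed.

End D.
Lemma hi_lem (R : realType) (t bt g L Nu urs Nrs : R) : 0 < t -> t < 1 -> 0 < bt -> 0 < L ->
  t ^+ 2 / ((1 - t) * bt) <= g / L -> 0 <= Nrs ->
  ((1 - t) ^+ 2 * Nu + 2 * t * (1 - t) * urs + t ^+ 2 * Nrs) / (2 * ((1 - t) * bt))
   - t / bt * urs - g / (2 * L) * Nrs <= (1 - t) * (Nu / (2 * bt)).
Proof.
move=> t0 t1 b0 L0 key N0.
have e : ((1 - t) ^+ 2 * Nu + 2 * t * (1 - t) * urs + t ^+ 2 * Nrs) / (2 * ((1 - t) * bt))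
   - t / bt * urs - g / (2 * L) * Nrs
   = (1 - t) * (Nu / (2 * bt)) + (t ^+ 2 / ((1 - t) * bt) - g / L) * Nrs / 2.
  field; rewrite !gt_eqF //; lra.
rewrite e.
have : (t ^+ 2 / ((1 - t) * bt) - g / L) * Nrs <= 0.
  by rewrite mulr_le0_ge0 // subr_le0.
lra.
Qed.

Lemma key_lem (R : realType) (t b1 g1 L : R) : 0 < b1 -> 0 < L -> L * t ^+ 2 <= b1 * g1 ->
  t ^+ 2 / b1 <= g1 / L.
Proof.
move=> b0 L0 h; rewrite ler_pdivrMr // mulrAC ler_pdivlMr //; lra.
Qed.

Lemma hii_lem (R : realType) (t g c d : R) : 0 < t -> t < 1 -> 0 < g -> c <= 1 -> 0 <= d ->
  t * (1 - t) * g * d <= t * ((1 - c * t) * g) * d.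
Proof.
move=> t0 t1 g0 c1 d0.
rewrite -subr_ge0.
have -> : t * ((1 - c * t) * g) * d - t * (1 - t) * g * d = (t * t * g) * (d * (1 - c)) by ring.
apply: mulr_ge0; first by rewrite !mulr_ge0 // ltW.
by apply: mulr_ge0 => //; lra.
Qed.
Lemma dotv_trmx (R : realType) (m n : nat) (A : 'M[R]_(m, n)) (y : 'cV[R]_m) (z : 'cV[R]_n) :
  dotv (A^T *m y) z = dotv y (A *m z).
Proof. by rewrite !dotvE trmx_mul trmxK mulmxA. Qed.

Lemma young (R : realType) (k : nat) (u y : 'cV[R]_k) (bt : R) : 0 < bt ->
  dotv u y - bt / 2 * dotv y y <= dotv u u / (2 * bt).
Proof.
move=> b0; have h := dotv_ge0 (u - bt *: y).
rewrite !dotvBl !dotvBr !dotvZl !dotvZr (dotvC y u) in h.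
rewrite ler_pdivlMr; last by lra.
nra.
Qed.

Section S.
Variables (R : realType) (n m q : nat) (f : 'cV[R]_n -> \bar R) (X : 'cV[R]_n -> Prop)
  (A : 'M[R]_(m, n)) (b : 'cV[R]_m) (p : 'cV[R]_q -> R) (gp : 'cV[R]_q -> 'cV[R]_q)
  (S : 'M[R]_(q, n)) (xc : 'cV[R]_n).

Lemma gs_le gam y x : X x -> (gsmooth f X A b p gp S xc gam y <= smobj f A b p gp S xc gam y x)%E.
Proof. by move=> Xx; apply: ereal_inf_lbound; exists x. Qed.

Lemma gs_eq gam y xs : is_smoothed_minimizer f X A b p gp S xc gam y xs ->
  gsmooth f X A b p gp S xc gam y = smobj f A b p gp S xc gam y xs.
Proof.
move=> [Xxs hmin]; apply/eqP; rewrite eq_le gs_le //=.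
by apply: le_ereal_inf_tmp => e [x [Xx ->]]; apply: hmin.
Qed.

End S.
Theorem lemma4p2 (R : realType) (n m q : nat)
  (f : 'cV[R]_n -> \bar R) (X : 'cV[R]_n -> Prop)
  (A : 'M[R]_(m, n)) (b : 'cV[R]_m)
  (p : 'cV[R]_q -> R) (gp : 'cV[R]_q -> 'cV[R]_q) (sigma : R)
  (S : 'M[R]_(q, n)) (xc : 'cV[R]_n)
  (xstar : R -> 'cV[R]_m -> 'cV[R]_n) (Lg : R) :
  (* f proper, closed, convex; X nonempty, closed, convex *)
  proper_fun f -> closed_fun f -> convex_fun f ->
  (exists x, X x) -> closed_set X -> convex_set X ->
  (* standing assumption *)
  (exists xs, primal_solution f X A b xs) ->
  (polytope X \/ exists x, A *m x = b /\ relint X x) ->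
  (* prox-function: smooth, sigma-strongly convex, gradient gp *)
  0 < sigma -> (forall v, has_grad p v (gp v)) -> strongly_convex p sigma ->
  X xc ->
  (* x*_gamma(y) is a minimizer defining g_gamma(y) *)
  (forall (gam : R) (y : 'cV[R]_m), 0 < gam ->
     is_smoothed_minimizer f X A b p gp S xc gam y (xstar gam y)) ->
  (* standing smoothability assumption *)
  0 < Lg -> smoothable f X A b p gp S xc xstar Lg ->
  forall (xb : 'cV[R]_n) (yb : 'cV[R]_m) (gam bet tau c : R),
  X xb -> 0 < gam -> 0 < bet -> 0 < tau < 1 -> -1 < c <= 1 ->
  let bet1 := (1 - tau) * bet in
  let gam1 := (1 - c * tau) * gam in
  let yh := (1 - tau) *: yb + (tau / bet) *: (A *m xb - b) in
  let xs := xstar gam1 yh in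
  let xb1 := (1 - tau) *: xb + tau *: xs in
  let yb1 := yh + (gam1 / Lg) *: (A *m xs - b) in
  let psi := tau * (1 - tau) * gam *
       (bregman p gp (S *m xs) (S *m xc)
        - c * bregman p gp (S *m xstar gam1 yb) (S *m xc)) in
  Lg * tau ^+ 2 <= bet1 * gam1 ->
  X xb1 /\
  (gap f X A b p gp S xc gam1 bet1 xb1 yb1
     <= (1 - tau)%:E * gap f X A b p gp S xc gam bet xb yb - psi%:E)%E.
Proof.
move=> hprop _ hconv _ _ hXc _ _ sig0 hgp hsc _ hmin Lg0 hsm xb yb gam bet tau c Xxb gam0 bet0
  /andP [tau0 tau1] /andP [cm1 c1].
move=> bet1 gam1 yh xs xb1 yb1 psi hstep.
have gam10 : 0 < gam1 by rewrite /gam1 mulr_gt0 //; nra.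
have bet10 : 0 < bet1 by rewrite /bet1 mulr_gt0 //; lra.
have Xxs : X xs := proj1 (hmin gam1 yh gam10).
have Xxb1 : X xb1.
  rewrite /xb1; have := hXc xb xs (1 - tau) Xxb Xxs.
  rewrite (_ : 1 - (1 - tau) = tau); last by ring.
  by apply; apply/andP; split; lra.
split => //.
move: (hsm gam1 gam10) => /= [hfin [hconc [hgrad hlip]]].
set gv := fun y => fine (gsmooth f X A b p gp S xc gam1 y).
set br := fun x => bregman p gp (S *m x) (S *m xc).
have fxs_fin : forall y, f (xstar gam1 y) \is a fin_num.
  move=> y; have := hfin y; rewrite (gs_eq (hmin gam1 y gam10)) /smobj fin_numD.
  by case/andP.
have gv_eq : forall y, gv y = fine (f (xstar gam1 y)) +
    (dotv y (A *m xstar gam1 y - b) + gam1 * br (xstar gam1 y)).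
  move=> y; rewrite /gv (gs_eq (hmin gam1 y gam10)) /smobj -(fineK (fxs_fin y)) -EFinD.
  by [].
have gv_le : forall y x r, X x -> f x = r%:E ->
    gv y <= r + (dotv y (A *m x - b) + gam1 * br x).
  move=> y x r Xx Efx; have := gs_le f A b p gp S xc gam1 y Xx.
  by rewrite -(fineK (hfin y)) /smobj Efx -EFinD lee_fin.
have hd := descent (g := gv) (G := fun y => A *m xstar gam1 y - b) (L := Lg / gam1)
  (ltW (divr_gt0 Lg0 gam10)) hconc hgrad hlip yh ((gam1 / Lg) *: (A *m xs - b)).
set rs := A *m xs - b; set u := A *m xb - b; set x1 := xstar gam1 yb.
set r1 := A *m x1 - b.
have hD : gv yh + gam1 / (2 * Lg) * dotv rs rs <= gv yb1.
  move: hd; rewrite dotvZr dotvZl dotvZr.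
  have -> : Lg / gam1 / 2 * (gam1 / Lg * (gam1 / Lg * dotv rs rs)) = gam1 / (2 * Lg) * dotv rs rs / 2 * 2.
    by field; apply/andP; split; rewrite gt_eqF.
  have -> : gam1 / Lg * dotv rs rs = gam1 / (2 * Lg) * dotv rs rs * 2.
    by field; rewrite gt_eqF.
  move=> h; apply: le_trans h; lra.
have Fs_E : f xs = (fine (f xs))%:E := esym (fineK (fxs_fin yh)).
have F1_E : f x1 = (fine (f x1))%:E := esym (fineK (fxs_fin yb)).
set Fs := fine (f xs); set F1 := fine (f x1).
have gyh : gv yh = Fs + (dotv yh rs + gam1 * br xs) := gv_eq yh.
have gyb : gv yb = F1 + (dotv yb r1 + gam1 * br x1) := gv_eq yb.
have gyb_le : gv yb <= Fs + (dotv yb rs + gam1 * br xs) := gv_le yb xs Fs Xxs Fs_E.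
have Xx1 : X x1 := proj1 (hmin gam1 yb gam10).
have br0 : forall x, 0 <= br x.
  move=> x; rewrite /br /bregman.
  have := grad_ineq (u := S *m x) (hgp (S *m xc)).
  have : forall t, 0 < t < 1 -> p (S *m xc + t *: (S *m x - S *m xc)) <=
      t * p (S *m x) + (1 - t) * p (S *m xc).
    move=> t /andP [t0 t1]; rewrite vec_comb.
    have := hsc (S *m x) (S *m xc) t; rewrite (ltW t0) (ltW t1) => /(_ isT).
    have : 0 <= sigma / 2 * t * (1 - t) * norm2 (S *m x - S *m xc) ^+ 2.
      apply: mulr_ge0; last exact: sqr_ge0.
      apply: mulr_ge0; last lra.
      apply: mulr_ge0; last lra.
      apply: divr_ge0; lra.
    lra.
  move=> h /(_ h); lra.
case Efb: (f xb) => [Fb | | ]; last first.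
- by have := (proj2 hprop) xb; rewrite Efb.
- have hsup : gap f X A b p gp S xc gam bet xb yb = +oo%E.
    apply: ereal_supy; exists x1, 0; split => //.
    by rewrite Efb F1_E.
  rewrite hsup muleC gt0_mulye ?lte_fin; last lra.
  by rewrite addye // leey.
have hfb1 : (f xb1 <= ((1 - tau) * Fb + tau * Fs)%:E)%E.
  have h : (f ((1 - tau) *: xb + (1 - (1 - tau)) *: xs)%R <=
      (1 - tau)%:E * f xb + (1 - (1 - tau))%:E * f xs)%E.
    by apply: hconv; apply/andP; split; lra.
  rewrite (_ : 1 - (1 - tau) = tau) in h; last by ring.
  rewrite Efb Fs_E in h; apply: (le_trans h).
  by rewrite -!EFinM -EFinD.
case Ef1: (f xb1) => [F1b | | ]; last first.
- by have := (proj2 hprop) xb1; rewrite Ef1.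
- by move: hfb1; rewrite Ef1.
rewrite Ef1 lee_fin in hfb1.
set u1 := A *m xb1 - b.
have hup : (gap f X A b p gp S xc gam1 bet1 xb1 yb1 <=
    (F1b + dotv u1 u1 / (2 * bet1) - gv yb1)%:E)%E.
  apply: ge_ereal_sup => e [x [y [Xx ->]]].
  case Efx: (f x) => [Fx | |].
  + rewrite Ef1 -EFinB -EFinD lee_fin.
    have hx := gv_le yb1 x Fx Xx Efx.
    have e1 : dotv (A^T *m yb1) (xb1 - x) = dotv yb1 u1 - dotv yb1 (A *m x - b).
      rewrite dotv_trmx -dotvBr; congr dotv.
      by rewrite mulmxBr /u1; apply/matrixP => i j; rewrite !mxE; ring.
    have e2 : dotv (b - A *m xb1) (yb1 - y) = - dotv u1 yb1 + dotv u1 y.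
      rewrite (_ : b - A *m xb1 = - u1); last by rewrite opprB.
      by rewrite dotvNl dotvBr; ring.
    have hy := young u1 y bet10.
    rewrite norm2_sqr e1 e2 (dotvC u1 yb1).
    rewrite /br in hx; lra.
  + by rewrite Ef1 /= addeNy addNye leNye.
  + by have := (proj2 hprop) x; rewrite Efx.
set y0 := bet^-1 *: u.
have hlow : ((Fb - F1 + (- dotv yb r1 + dotv u u / (2 * bet) - gam * br x1))%:E
    <= gap f X A b p gp S xc gam bet xb yb)%E.
  have : (f xb - f x1 + (dotv (A^T *m yb) (xb - x1) + dotv (b - A *m xb) (yb - y0)
       - gam * br x1 - bet / 2 * norm2 y0 ^+ 2)%:E
       <= gap f X A b p gp S xc gam bet xb yb)%E.
    by apply: ereal_sup_ubound; exists x1, y0; split.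
  rewrite Efb F1_E -EFinB -EFinD; apply: le_trans; rewrite lee_fin.
  have e3 : dotv (A^T *m yb) (xb - x1) = dotv yb u - dotv yb r1.
    rewrite dotv_trmx -dotvBr; congr dotv.
    by rewrite mulmxBr /u /r1; apply/matrixP => i j; rewrite !mxE; ring.
  have e4 : dotv (b - A *m xb) (yb - y0) = - dotv u yb + bet^-1 * dotv u u.
    rewrite (_ : b - A *m xb = - u); last by rewrite opprB.
    by rewrite dotvNl dotvBr dotvZr; ring.
  have e5 : bet / 2 * norm2 y0 ^+ 2 = dotv u u / (2 * bet) * 2 - dotv u u / (2 * bet).
    rewrite norm2_sqr dotvZl dotvZr; field; rewrite gt_eqF //.
  have e6 : bet^-1 * dotv u u = dotv u u / (2 * bet) * 2.
    field; rewrite gt_eqF //.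
  rewrite e3 e4 e5 e6 (dotvC u yb) -/F1; lra.
apply: (le_trans hup).
apply: (@le_trans _ _ (((1 - tau) * (Fb - F1 + (- dotv yb r1 + dotv u u / (2 * bet)
     - gam * br x1)) - psi)%:E)); last first.
  rewrite EFinD EFinM; apply: leeD => //.
  by apply: lee_wpmul2l => //; rewrite lee_fin; lra.
rewrite lee_fin.
have eu1 : u1 = (1 - tau) *: u + tau *: rs.
  rewrite /u1 /xb1 /u /rs mulmxDr -!scalemxAr.
  by rewrite vec2.
have N2u1 : dotv u1 u1 = (1 - tau) ^+ 2 * dotv u u + 2 * tau * (1 - tau) * dotv u rs
    + tau ^+ 2 * dotv rs rs.
  by rewrite eu1 dotv_comb.
have eyh : dotv yh rs = (1 - tau) * dotv yb rs + tau / bet * dotv u rs.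
  exact: dotv_comb1.
have epsi : psi = tau * (1 - tau) * gam * (br xs - c * br x1) by [].
have key : tau ^+ 2 / bet1 <= gam1 / Lg := key_lem bet10 Lg0 hstep.
have Nrs0 := dotv_ge0 rs.
have hi : dotv u1 u1 / (2 * bet1) - tau / bet * dotv u rs - gam1 / (2 * Lg) * dotv rs rs
    <= (1 - tau) * (dotv u u / (2 * bet)).
  by rewrite N2u1; apply: hi_lem.
have hii : tau * (1 - tau) * gam * br xs <= tau * gam1 * br xs :=
  hii_lem tau0 tau1 gam0 c1 (br0 xs).
have hd1 : (1 - tau) * (gam1 * br x1) = (1 - tau) * gam * br x1 - (1 - tau) * c * tau * gam * br x1.
  by rewrite /gam1; ring.
have h45 : (1 - tau) * gv yb <= (1 - tau) * (Fs + (dotv yb rs + gam1 * br xs)).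
  by rewrite ler_wpM2l //; lra.
rewrite gyb in h45.
rewrite epsi.
rewrite gyh eyh in hD.
clearbody bet1 gam1 gv br psi.
move: hfb1 hD hi hii hd1 h45.
generalize (gv yb1) (dotv u1 u1) (dotv yb r1) (dotv u u) (br x1) (br xs) (dotv yb rs) (dotv u rs) (dotv rs rs).
move=> G1 G2 G3 G4 G5 G6 G7 G8 G9 hfb1 hD hi hii hd1 h45.
lra.
Qed.
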